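(* Let $G$ be a finitely generated torsion-free nilpotent group and suppose the decomposition $\overline{G}=R_1\times R_2$ into rational subgroups matches the decomposition $G=G_1\times G_2$. Let $X_i=R_iZ(\overline{G})\cap G$. If $H_1,H_2$ are subgroups of $G$ such that $X_i=H_iZ(G)$ for $i=1,2$ and $Z(G)=Z(H_1)\times Z(H_2)$ (internal direct product), then $G=H_1\times H_2$.
   Context: $\overline{G}$ is the rational closure of $G$ (torsion-free nilpotent, containing $G$, uniquely divisible, each element has a positive power in $G$); for $H\le G$, $\overline{H}$ is the set of elements of $\overline{G}$ having a positive power in $H$. A subgroup is rational if closed under taking all $n$-th roots. A decomposition $\overline{G}=R_1\times R_2$ matches $G=G_1\times G_2$ if $\overline{G_i}\,Z(\overline{G})=R_i\,Z(\overline{G})$ for $i=1,2$. *)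

(* Defs.v *)
From Stdlib Require Import List Arith.

Record group := Group {
  carrier :> Type;
  gmul : carrier -> carrier -> carrier;
  ginv : carrier -> carrier;
  gone : carrier;
  gmulA : forall x y z, gmul x (gmul y z) = gmul (gmul x y) z;
  gmul1l : forall x, gmul gone x = x;
  gmul1r : forall x, gmul x gone = x;
  gmulVl : forall x, gmul (ginv x) x = gone;
  gmulVr : forall x, gmul x (ginv x) = gone
}.

Arguments gmul {g} _ _.
Arguments ginv {g} _.
Arguments gone {g}.

Section GroupDefs.
Variable T : group.

Definition gset := T -> Prop.

Definition full : gset := fun _ => True.
Definition trivial : gset := fun x => x = gone.

Definition set_eq (A B : gset) : Prop := forall x, A x <-> B x.
Definition subset (A B : gset) : Prop := forall x, A x -> B x.
Definition setI (A B : gset) : gset := fun x => A x /\ B x.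

Definition setM (A B : gset) : gset :=
  fun x => exists a b, A a /\ B b /\ x = gmul a b.

Definition subgroup (S : gset) : Prop :=
  S gone /\ (forall x y, S x -> S y -> S (gmul x y)) /\
  (forall x, S x -> S (ginv x)).

Definition gen (S : gset) : gset :=
  fun x => forall K, subgroup K -> subset S K -> K x.

Fixpoint gpow (x : T) (n : nat) : T :=
  match n with O => gone | S m => gmul x (gpow x m) end.

Definition commg (x y : T) : T := gmul (gmul (ginv x) (ginv y)) (gmul x y).

Definition commgroup (A B : gset) : gset :=
  gen (fun x => exists a b, A a /\ B b /\ x = commg a b).

(* lower central series: gamma_1 G = G, gamma_{i+1} G = [gamma_i G, G] *)
Fixpoint lcs (G : gset) (n : nat) : gset :=
  match n with O => G | S m => commgroup (lcs G m) G end.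

Definition nilpotent (G : gset) : Prop :=
  exists c, subset (lcs G c) trivial.

Definition torsion_free (G : gset) : Prop :=
  forall x n, G x -> 0 < n -> gpow x n = gone -> x = gone.

Definition finitely_generated (G : gset) : Prop :=
  exists l : list T, (forall x, In x l -> G x) /\
                     set_eq G (gen (fun x => In x l)).

Definition center (H : gset) : gset :=
  fun x => H x /\ forall y, H y -> gmul x y = gmul y x.

Definition dprod (G H1 H2 : gset) : Prop :=
  subgroup H1 /\ subgroup H2 /\
  (forall x y, H1 x -> H2 y -> gmul x y = gmul y x) /\
  set_eq (setI H1 H2) trivial /\
  set_eq G (setM H1 H2).

(* The whole group T is a rational closure of its subgroup G:
   T is torsion-free nilpotent, contains G, is uniquely divisible,
   and every element of T has a positive power in G. *)
Definition rational_closure_of (G : gset) : Prop :=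
  subgroup G /\ torsion_free full /\ nilpotent full /\
  (forall x n, 0 < n -> exists y, gpow y n = x /\
       forall z, gpow z n = x -> z = y) /\
  (forall x, exists n, 0 < n /\ G (gpow x n)).

Definition rclosure (H : gset) : gset :=
  fun x => exists n, 0 < n /\ H (gpow x n).

Definition rational (R : gset) : Prop :=
  subgroup R /\ forall x n, 0 < n -> R (gpow x n) -> R x.

Definition matches (R1 R2 G1 G2 : gset) : Prop :=
  set_eq (setM (rclosure G1) (center full)) (setM R1 (center full)) /\
  set_eq (setM (rclosure G2) (center full)) (setM R2 (center full)).

End GroupDefs.

Arguments full {T} _.
Arguments trivial {T} _.
Arguments set_eq {T} _ _.
Arguments subset {T} _ _.
Arguments setI {T} _ _ _.
Arguments setM {T} _ _ _.
Arguments subgroup {T} _.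
Arguments gen {T} _ _.
Arguments gpow {T} _ _.
Arguments commg {T} _ _.
Arguments commgroup {T} _ _ _.
Arguments lcs {T} _ _ _.
Arguments nilpotent {T} _.
Arguments torsion_free {T} _.
Arguments finitely_generated {T} _.
Arguments center {T} _ _.
Arguments dprod {T} _ _ _.
Arguments rational_closure_of {T} _.
Arguments rclosure {T} _ _.
Arguments rational {T} _.
Arguments matches {T} _ _ _ _.

(* Main.v *)
Require Import Defs.
From Stdlib Require Import List Arith.

Section H.
Variable T : group.
Definition cm (x y : T) := gmul x y = gmul y x.

Lemma cm_sym x y : cm x y -> cm y x.
Proof. unfold cm; auto. Qed.

Lemma cm_mulL a b c : cm a c -> cm b c -> cm (gmul a b) c.
Proof.
  unfold cm; intros H1 H2.
  rewrite <- gmulA, H2, gmulA, H1, <- gmulA; reflexivity.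
Qed.

Lemma cm_mulR a c d : cm a c -> cm a d -> cm a (gmul c d).
Proof. intros; apply cm_sym, cm_mulL; apply cm_sym; auto. Qed.
End H.

Theorem mainTheorem13 (Gbar : group) (G G1 G2 R1 R2 H1 H2 : gset Gbar) :
  finitely_generated G -> torsion_free G -> nilpotent G ->
  rational_closure_of G ->
  rational R1 -> rational R2 -> dprod full R1 R2 ->
  dprod G G1 G2 ->
  matches R1 R2 G1 G2 ->
  subgroup H1 -> subset H1 G -> subgroup H2 -> subset H2 G ->
  set_eq (setI (setM R1 (center full)) G) (setM H1 (center G)) ->
  set_eq (setI (setM R2 (center full)) G) (setM H2 (center G)) ->
  dprod (center G) (center H1) (center H2) ->
  dprod G H1 H2.
Proof.
  intros _ _ _ [SG _] _ _ [_ [_ [CR _]]] [SG1 [SG2 [_ [_ EG]]]] [M1 M2]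
    S1 sub1 S2 sub2 E1 E2 [_ [_ [_ [IZ EZ]]]].
  assert (ZG1 : center G gone).
  { split. apply SG. intros; rewrite gmul1l, gmul1r; auto. }
  assert (HR1 : forall h, H1 h -> setM R1 (center full) h).
  { intros h Hh. apply (proj2 (E1 h)). exists h, gone.
    split; [auto|split; [auto| symmetry; apply gmul1r]]. }
  assert (HR2 : forall h, H2 h -> setM R2 (center full) h).
  { intros h Hh. apply (proj2 (E2 h)). exists h, gone.
    split; [auto|split; [auto| symmetry; apply gmul1r]]. }
  assert (COMM : forall x y, H1 x -> H2 y -> gmul x y = gmul y x).
  { intros x y Hx Hy.
    destruct (HR1 x Hx) as [r1 [z1 [Hr1 [[_ Hz1] ->]]]].
    destruct (HR2 y Hy) as [r2 [z2 [Hr2 [[_ Hz2] ->]]]].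
    change (cm _ (gmul r1 z1) (gmul r2 z2)).
    apply cm_mulL; apply cm_mulR.
    - apply CR; auto.
    - apply cm_sym, Hz2; exact I.
    - apply Hz1; exact I.
    - apply Hz1; exact I. }
  split; [exact S1|split; [exact S2|split; [exact COMM|split]]].
  - intro x; split.
    + intros [Hx1 Hx2]. apply (proj1 (IZ x)). split.
      * split; [auto|]. intros y Hy. symmetry. apply COMM; auto.
      * split; [auto|]. intros y Hy. apply COMM; auto.
    + intros ->. split; [apply S1 | apply S2].
  - intro x; split.
    + intros Gx. destruct (proj1 (EG x) Gx) as [g1 [g2 [Hg1 [Hg2 ->]]]].
      assert (Gg1 : G g1).
      { apply (proj2 (EG g1)). exists g1, gone. repeat split; auto.
        apply SG2. symmetry; apply gmul1r. }
      assert (Gg2 : G g2).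
      { apply (proj2 (EG g2)). exists gone, g2. repeat split; auto.
        apply SG1. symmetry; apply gmul1l. }
      assert (X1 : setM H1 (center G) g1).
      { apply (proj1 (E1 g1)). split; auto. apply (proj1 (M1 g1)).
        exists g1, gone. split; [exists 1; split; [auto| simpl; rewrite gmul1r; auto]|].
        split; [split; [exact I| intros; rewrite gmul1l, gmul1r; auto]|].
        symmetry; apply gmul1r. }
      assert (X2 : setM H2 (center G) g2).
      { apply (proj1 (E2 g2)). split; auto. apply (proj1 (M2 g2)).
        exists g2, gone. split; [exists 1; split; [auto| simpl; rewrite gmul1r; auto]|].
        split; [split; [exact I| intros; rewrite gmul1l, gmul1r; auto]|].
        symmetry; apply gmul1r. }
      destruct X1 as [h1 [z1 [Hh1 [Zz1 ->]]]].
      destruct X2 as [h2 [z2 [Hh2 [Zz2 ->]]]].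
      assert (Zz : center G (gmul z1 z2)).
      { destruct Zz1 as [Gz1 Cz1]; destruct Zz2 as [Gz2 Cz2]. split.
        apply SG; auto. intros y Gy. change (cm _ (gmul z1 z2) y).
        apply cm_mulL; [apply Cz1 | apply Cz2]; auto. }
      destruct (proj1 (EZ _) Zz) as [a [b [[Ha _] [[Hb _] Eab]]]].
      exists (gmul h1 a), (gmul h2 b). split; [apply S1; auto|].
      split; [apply S2; auto|].
      assert (E : gmul (gmul h1 z1) (gmul h2 z2) = gmul (gmul h1 h2) (gmul z1 z2)).
      { rewrite <- !gmulA. f_equal. rewrite !gmulA. f_equal.
        destruct Zz1 as [_ C]. apply C. apply sub2; auto. }
      rewrite E, Eab. rewrite <- !gmulA. f_equal. rewrite !gmulA. f_equal.
      symmetry; apply COMM; auto.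
    + intros [a [b [Ha [Hb ->]]]]. apply SG; auto.
Qed.
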